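(* Let $p$ be a prime, $q=p^n$, $d$ a natural number with $(d,p)=1$, $\psi$ a nontrivial additive character of $\mathbb{F}_p$, and $r$ a natural number with $r<d$. Let $\alpha\in\mathbb{F}_{q^r}$. Then the average of $\psi\left(\mathrm{Tr}_{\mathbb{F}_{q^r}/\mathbb{F}_p}f(\alpha)\right)$ over $f\in\mathcal{F}_d$ (uniform) equals $1$ if $\alpha=0$, or if $p\mid r$ and $\alpha\in\mathbb{F}_{q^{r/p}}$; and equals $0$ otherwise.
   Context: $\mathcal{F}_d$ denotes the set of polynomials $f=\sum_{i=0}^d a_ix^i\in\mathbb{F}_q[x]$ with $a_d\neq 0$ and $a_i=0$ for every $i\ge 0$ divisible by $p$. *)

(* Defs.v *)
From mathcomp Require Import all_boot all_order all_algebra all_field.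
Set Implicit Arguments. Unset Strict Implicit. Unset Printing Implicit Defensive.
Import GRing.Theory Num.Theory.
Local Open Scope ring_scope.

(* Inside a finite field L of characteristic p, the subfield F_m
   (m a power of p, with F_m contained in L) is the set of x with x^m = x. *)
Definition Fsub (L : finFieldType) (m : nat) : pred L := [pred x | x ^+ m == x].
Arguments Fsub : clear implicits.

Definition trace (L : finFieldType) (p k : nat) (x : L) : L :=
  \sum_(j < k) x ^+ (p ^ j).

Definition poly_of (L : finFieldType) (d : nat) (a : {ffun 'I_d.+1 -> L}) : {poly L} :=
  \poly_(i < d.+1) a (inord i).

(* F_d : polynomials sum_{i<=d} a_i x^i over F_q (q = the subfield size),
   with a_d <> 0 and a_i = 0 whenever p | i (in particular a_0 = 0),
   encoded by their coefficient vectors. *)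
Definition Fd (L : finFieldType) (p q d : nat) : {set {ffun 'I_d.+1 -> L}} :=
  [set a : {ffun 'I_d.+1 -> L} | [&& [forall i, a i \in Fsub L q],
              [forall i : 'I_d.+1, (p %| i)%N ==> (a i == 0)] &
              a ord_max != 0]].

(* Main.v *)
Require Import Defs.
From mathcomp Require Import all_boot all_order all_algebra all_field.
From mathcomp Require Import zify ring.
Set Implicit Arguments. Unset Strict Implicit. Unset Printing Implicit Defensive.
Import GRing.Theory Num.Theory.
Local Open Scope ring_scope.

Lemma sum_split (V : nmodType) (G : nat -> V) a b :
  \sum_(0 <= j < a * b) G j = \sum_(0 <= t < b) \sum_(0 <= w < a) G (w + a * t)%N.
Proof.
elim: b => [|b IH]; first by rewrite muln0 !big_geq.
rewrite big_nat_recr //= -IH mulnS addnC (@big_cat_nat _ _ _ (a * b)) ?leq_addl //=.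
congr (_ + _).
rewrite (_ : \sum_(a*b <= i < a*b+a) G i = \sum_(0 + a*b <= i < a*b+a) G i) // big_addn addKn.
by [].
by rewrite leq_addr.
Qed.

Lemma frobD (L : finFieldType) p k (x y : L) : p \in [pchar L] ->
  (x + y) ^+ (p ^ k) = x ^+ (p ^ k) + y ^+ (p ^ k).
Proof.
move=> hp; elim: k => [|k IH]; first by rewrite !expr1.
by rewrite expnSr !exprM IH -!(pFrobenius_autE hp) pFrobenius_autD_comm //; apply: mulrC.
Qed.

Lemma frob0 (L : finFieldType) m : (0 < m)%N -> (0 : L) ^+ m = 0.
Proof. by case: m => // m _; rewrite exprS mul0r. Qed.

Lemma frobS (L : finFieldType) p k I (r : seq I) (P : pred I) (F : I -> L) :
  p \in [pchar L] ->
  (\sum_(i <- r | P i) F i) ^+ (p ^ k) = \sum_(i <- r | P i) F i ^+ (p ^ k).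
Proof.
move=> hp; apply: (big_morph (fun x : L => x ^+ (p ^ k))).
  by move=> x y; apply: frobD.
apply: frob0; rewrite expn_gt0 prime_gt0 //; exact: (pcharf_prime hp).
Qed.

Lemma fix_iter (L : finFieldType) m v (x : L) : x ^+ m = x -> x ^+ (m ^ v) = x.
Proof.
move=> hx; elim: v => [|v IH]; first by rewrite expr1.
by rewrite expnSr exprM IH hx.
Qed.

Lemma traceD (L : finFieldType) p e k (x y : L) : p \in [pchar L] ->
  trace (p ^ e) k (x + y) = trace (p ^ e) k x + trace (p ^ e) k y.
Proof.
move=> hp; rewrite /trace -big_split /=; apply: eq_bigr => j _.
by rewrite -expnM frobD.
Qed.

Lemma trace0 (L : finFieldType) m k : (0 < m)%N -> trace m k (0 : L) = 0.
Proof.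
move=> hm; rewrite /trace big1 // => j _; apply: frob0; by rewrite expn_gt0 hm.
Qed.

Lemma traceS (L : finFieldType) p e k I (r : seq I) (P : pred I) (F : I -> L) :
  p \in [pchar L] ->
  trace (p ^ e) k (\sum_(i <- r | P i) F i) = \sum_(i <- r | P i) trace (p ^ e) k (F i).
Proof.
move=> hp; apply: (big_morph (trace (p ^ e) k)).
  by move=> x y; apply: traceD.
apply: trace0; rewrite expn_gt0 prime_gt0 //; exact: (pcharf_prime hp).
Qed.

Lemma trace_scale (L : finFieldType) m k (c x : L) : c ^+ m = c ->
  trace m k (c * x) = c * trace m k x.
Proof.
move=> hc; rewrite /trace mulr_sumr; apply: eq_bigr => j _.
by rewrite exprMn (fix_iter _ hc).
Qed.

Lemma trace_in (L : finFieldType) p e k (x : L) : p \in [pchar L] ->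
  x ^+ ((p ^ e) ^ k) = x -> (trace (p ^ e) k x) ^+ (p ^ e) = trace (p ^ e) k x.
Proof.
move=> hp hx; rewrite /trace frobS //.
under eq_bigr => j _ do rewrite -exprM -expnSr.
case: k hx => [|k] hx; first by rewrite !big_ord0.
rewrite big_ord_recr big_ord_recl /= hx addrC; congr (_ + _).
Qed.

Lemma trace_trans (L : finFieldType) p n r (x : L) : p \in [pchar L] ->
  trace p (n * r) x = trace p n (trace (p ^ n) r x).
Proof.
move=> hp; rewrite /trace.
under [in RHS]eq_bigr => u _ do rewrite frobS //.
rewrite exchange_big /= -(big_mkord xpredT (fun j => x ^+ (p ^ j))) sum_split.
rewrite big_mkord; apply: eq_bigr => v _; rewrite big_mkord; apply: eq_bigr => u _.
by rewrite -exprM expnD expnM mulnC.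
Qed.

Lemma period (L : finFieldType) m k w t (x : L) : x ^+ (m ^ k) = x ->
  x ^+ (m ^ (w + k * t)) = x ^+ (m ^ w).
Proof.
move=> hx; by rewrite expnD mulnC exprM expnM (fix_iter _ hx).
Qed.

Lemma trace_nz (L : finFieldType) p N : prime p -> p \in [pchar L] -> (0 < N)%N ->
  #|L| = (p ^ N)%N -> exists y : L, trace p N y != 0.
Proof.
move=> pp hp; case: N => // N _ cL.
pose T : {poly L} := \sum_(j < N.+1) 'X^(p ^ j).
have hT y : T.[y] = trace p N.+1 y.
  by rewrite /T horner_sum /trace; apply: eq_bigr => j _; rewrite hornerXn.
have p1 : (1 < p)%N by apply: prime_gt1.
have T1 : T`_1 = 1.
  rewrite /T coef_sum.
  rewrite big_ord_recl /= expn0 coefXn eqxx big1 ?addr0 // => j _.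
  rewrite coefXn /=; case: eqP => // h.
  have : (p <= p ^ (bump 0 j))%N by rewrite -{1}(expn1 p) leq_pexp2l // ?prime_gt0.
  by rewrite -h leqNgt p1.
have Tnz : T != 0 by apply/eqP => h; move: T1; rewrite h coef0 => /eqP; rewrite eq_sym oner_eq0.
have sT : (size T <= (p ^ N).+1)%N.
  apply: (leq_trans (size_sum _ _ _)); apply/bigmax_leqP => j _.
  by rewrite size_polyXn ltnS leq_pexp2l ?prime_gt0 // -ltnS.
case: (boolP [forall y : L, T.[y] == 0]) => [/forallP hall | /forallPn [y hy]]; last first.
  by exists y; rewrite -hT.
exfalso.
have := max_poly_roots Tnz (_ : all (root T) (enum L)) (_ : uniq (enum L)).
rewrite -cardE cL => /(_ _ _)/leq_trans/(_ sT).
have hP : (0 < p ^ N)%N by rewrite expn_gt0 prime_gt0.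
rewrite expnS; move: hP p1; set P := (p ^ N)%N => hP p1' h.
have := h (_ : all (root T) (enum L)) (enum_uniq _).
  have -> : all (root T) (enum L) by apply/allP => y _; apply: hall.
  move=> /(_ isT) h'; nia.
Qed.

Lemma trace_frob (L : finFieldType) p m k (y : L) : p \in [pchar L] ->
  trace m k (y ^+ p) = (trace m k y) ^+ p.
Proof.
move=> hp; rewrite /trace -(expn1 p) frobS //; apply: eq_bigr => j _.
by rewrite exprAC.
Qed.

Lemma classify (L : finFieldType) p n r (a : L) : prime p -> p \in [pchar L] ->
  #|L| = ((p ^ n) ^ r)%N -> (0 < r)%N -> a != 0 ->
  (forall i, (0 < i <= r)%N -> ~~ (p %| i)%N -> trace (p ^ n) r (a ^+ i) = 0) ->
  (p %| r)%N && (a ^+ ((p ^ n) ^ (r %/ p)) == a).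
Proof.
move=> pp hp cL r0 a0 hs.
set q := (p ^ n)%N in cL hs *.
have ha : a ^+ (q ^ r) = a by rewrite -cL expf_card.
have hs' : forall i, (0 < i <= r)%N -> trace q r (a ^+ i) = 0.
  elim/ltn_ind => i IH /andP[i0 ir].
  case: (boolP (p %| i)%N) => [/dvdnP[j ij]|]; last by move=> np; apply: hs; rewrite ?i0.
  have p1 := prime_gt1 pp.
  rewrite ij exprM trace_frob // IH.
  - by rewrite frob0 // prime_gt0.
  - subst i; nia.
  - subst i; apply/andP; split; nia.
have ex : exists k, (0 < k)%N && (a ^+ (q ^ k) == a) by exists r; rewrite r0 ha eqxx.
case: (ex_minnP ex) => k /andP[k0 /eqP hk] kmin.
have rk : (r %% k = 0)%N.
  apply/eqP; apply: contraT; rewrite -lt0n => hpos.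
  have : (k <= (r %% k)%N)%N.
    apply: kmin; rewrite hpos /=.
    by rewrite -(period (r %% k)%N (r %/ k)%N hk) [(k * _)%N]mulnC addnC -divn_eq ha.
  by rewrite leqNgt ltn_pmod.
set m := (r %/ k)%N.
have rkm : r = (k * m)%N by rewrite /m mulnC (divn_eq r k) rk addn0 mulnK.
pose g (i : nat) := \sum_(w < k) (a ^+ (q ^ w)) ^+ i.
have hsg : forall i, trace q r (a ^+ i) = g i *+ m.
  move=> i; rewrite /trace -(big_mkord xpredT (fun j => (a ^+ i) ^+ (q ^ j))) rkm sum_split.
  transitivity (\sum_(0 <= t < m) g i); last by rewrite sumr_const_nat subn0.
  apply: eq_bigr => t _.
  rewrite /g big_mkord; apply: eq_bigr => w _.
  by rewrite exprAC period.
have kr : (k <= r)%N by apply: kmin; rewrite r0 ha eqxx.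
case: (boolP (p %| m)%N) => pm.
  apply/andP; split; first by rewrite rkm dvdn_mull.
  rewrite rkm -muln_divA //.
  by have := period 0 (m %/ p) hk; rewrite add0n expn0 expr1 => ->.
have hm : (m%:R : L) != 0 by rewrite -(dvdn_pcharf hp).
have hg : forall i, (0 < i <= r)%N -> g i = 0.
  move=> i hi; have := hs' i hi; rewrite hsg -mulr_natr => /eqP.
  by rewrite mulf_eq0 (negbTE hm) orbF => /eqP.
set k' := k.-1.
have kk : k = k'.+1 by rewrite prednK.
pose P : {poly L} := (\prod_(j < k') ('X - (a ^+ (q ^ j.+1))%:P)) * 'X.
have hPa : P.[a] != 0.
  rewrite /P hornerM hornerX mulf_neq0 // horner_prod; apply/prodf_neq0 => j _.
  rewrite hornerXsubC subr_eq0; apply/negP => /eqP h.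
  have : (k <= j.+1)%N by apply: kmin; rewrite ltn0Sn -h eqxx.
  by rewrite kk ltnNge ltn_ord.
have hPw : forall w : 'I_k', P.[a ^+ (q ^ w.+1)] = 0.
  move=> w; rewrite /P hornerM horner_prod; apply/eqP; rewrite mulf_eq0; apply/orP; left.
  by apply/prodf_eq0; exists w => //; rewrite hornerXsubC subrr.
have sP : (size P <= k.+1)%N.
  rewrite /P size_mulX; last by rewrite monic_neq0 // monic_prod_XsubC.
  by rewrite size_prod_XsubC [index_enum _]unlock -enumT size_enum_ord kk.
have : \sum_(w < k) P.[a ^+ (q ^ w)] = 0.
  under eq_bigr => w _ do rewrite horner_coef.
  rewrite exchange_big /= big1 // => i _.
  rewrite -mulr_sumr; case: (posnP i) => [i0|i0].
    by rewrite i0 /P coefMX eqxx mul0r.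
  rewrite -/(g i).   rewrite hg ?mulr0 // i0 /=; apply: leq_trans kr.
  by rewrite -ltnS; apply: leq_trans sP.
rewrite kk big_ord_recl /= expn0 expr1 big1 ?addr0.
  by move=> h; move: hPa; rewrite h eqxx.
by move=> w _; apply: hPw.
Qed.

Lemma easy_dir (L : finFieldType) p n r (a : L) : prime p -> p \in [pchar L] ->
  (a == 0) || ((p %| r)%N && (a ^+ ((p ^ n) ^ (r %/ p)) == a)) ->
  forall i, (0 < i)%N -> trace (p ^ n) r (a ^+ i) = 0.
Proof.
move=> pp hp /orP[/eqP -> | /andP[pr /eqP ha]] i i0.
  by rewrite expr0n eqn0Ngt i0 trace0 // expn_gt0 prime_gt0.
have hx : (a ^+ i) ^+ ((p ^ n) ^ (r %/ p)) = a ^+ i by rewrite exprAC ha.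
rewrite /trace -(big_mkord xpredT (fun j => (a ^+ i) ^+ ((p ^ n) ^ j))).
rewrite -(divnK pr) sum_split.
under eq_bigr => t _ do under eq_bigr => w _ do rewrite (period w t hx).
by rewrite sumr_const_nat subn0 mulrn_pchar.
Qed.

Unset Implicit Arguments.
Theorem lemma2 (p n d r : nat) (L : finFieldType) (psi : L -> algC) (alpha : L) :
  prime p -> p \in [pchar L] -> #|L| = ((p ^ n) ^ r)%N ->
  coprime d p ->
  (forall x, x \in Fsub L p -> psi x != 0) ->
  (forall x y, x \in Fsub L p -> y \in Fsub L p -> psi (x + y) = psi x * psi y) ->
  (exists2 x, x \in Fsub L p & psi x != 1) ->
  (r < d)%N ->
  (\sum_(a in Fd L p (p ^ n) d) psi (trace p (n * r) (poly_of a).[alpha]))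
    / #|Fd L p (p ^ n) d|%:R
  = if (alpha == 0) || ((p %| r)%N && (alpha \in Fsub L ((p ^ n) ^ (r %/ p))))
    then 1 else 0.
Proof.
move=> pp hp cL cdp psinz psiM [x0 x0p psix0] rd.
have p0 : (0 < p)%N by apply: prime_gt0.
have p1 : (1 < p)%N by apply: prime_gt1.
have inF : forall m (x : L), (x \in Fsub L m) = (x ^+ m == x) by move=> m x; rewrite /Fsub inE.
have cL' : #|L| = (p ^ (n * r))%N by rewrite expnM.
have nr0 : (0 < n * r)%N.
  rewrite lt0n; apply/eqP => h; have := finNzRing_gt1 L; by rewrite cL' h.
have r0 : (0 < r)%N by move: nr0; rewrite muln_gt0 => /andP[].
set q := (p ^ n)%N.
have psi0 : psi 0 = 1.
  have z0 : (0 : L) \in Fsub L p by rewrite inF frob0.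
  have h := psiM _ _ z0 z0; rewrite addr0 in h.
  by apply: (mulfI (psinz _ z0)); rewrite mulr1 -h.
have trp : forall x, trace p (n * r) x \in Fsub L p.
  move=> x; rewrite inF; have := @trace_in L p 1 (n * r) x hp; rewrite !expn1 => -> //.
  by rewrite -cL' expf_card.
have Fq_fix : forall x : L, x ^+ (q ^ r) = x by move=> x; rewrite -cL expf_card.
have ev : forall a : {ffun 'I_d.+1 -> L},
    (poly_of a).[alpha] = \sum_(i < d.+1) a i * alpha ^+ i.
  by move=> a; rewrite /poly_of horner_poly; apply: eq_bigr => i _; rewrite inord_val.
have trS : forall I (s : seq I) (P : pred I) (F : I -> L),
    trace p (n * r) (\sum_(i <- s | P i) F i) = \sum_(i <- s | P i) trace p (n * r) (F i).
  by move=> I s P F; have := @traceS L p 1 (n * r) I s P F hp; rewrite expn1.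
have trDp : forall x y : L, trace p (n * r) (x + y) = trace p (n * r) x + trace p (n * r) y.
  by move=> x y; have := @traceD L p 1 (n * r) x y hp; rewrite expn1.
have tterm : forall c x : L, c ^+ q = c ->
    trace p (n * r) (c * x) = trace p n (c * trace q r x).
  by move=> c x hc; rewrite trace_trans // trace_scale.
have Fqcond : forall m (x : L), (x \in Fsub L m) = (x ^+ m == x) := inF.
rewrite inF.
set cond := (alpha == 0) || _.
have dp : ~~ (p %| d)%N.
  apply/negP => h; have : (p %| gcdn d p)%N by rewrite dvdn_gcd h dvdnn.
  rewrite (eqP cdp) dvdn1 => /eqP h1.
  by move: p1; rewrite h1.
case: (boolP cond) => hcond.
  have zs := easy_dir pp hp hcond.
  have T0 : forall a, a \in Fd L p q d -> trace p (n * r) (poly_of a).[alpha] = 0.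
    move=> a; rewrite inE => /and3P[/forallP aq /forallP ap _].
    rewrite ev trS big1 // => i _.
    case: (posnP i) => [i0|i0].
      have /implyP := ap i; rewrite i0 dvdn0 => /(_ isT) /eqP ->.
      by rewrite mul0r; have := @trace0 L p (n * r) p0.
    have := aq i; rewrite inF => /eqP aiq.
    by rewrite tterm // zs // mulr0 trace0.
  rewrite (eq_bigr (fun _ => 1)); last by move=> a /T0 ->.
  rewrite sumr_const divff // pnatr_eq0 -lt0n card_gt0; apply/set0Pn.
  exists [ffun i => if i == ord_max then 1 else 0]; rewrite inE; apply/and3P; split.
  - apply/forallP => i; rewrite ffunE inF; case: ifP => _; first by rewrite expr1n.
    by rewrite frob0 // expn_gt0 p0.
  - apply/forallP => i; rewrite ffunE; case: (i =P ord_max) => [->|_]; rewrite ?eqxx ?implybT //.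
    by rewrite oner_eq0 implybF.
  - by rewrite ffunE eqxx oner_eq0.
have [i0 /and4P[i0pos i0r i0p ti0]] : exists i0, [&& (0 < i0)%N, (i0 <= r)%N, ~~ (p %| i0)%N &
    trace q r (alpha ^+ i0) != 0].
  case: (boolP [forall i : 'I_r.+1, (0 < i)%N ==> ~~ (p %| i)%N ==> (trace q r (alpha ^+ i) == 0)]).
    move=> /forallP hall; exfalso; move: hcond; rewrite /cond.
    case: (boolP (alpha == 0)) => //= a0.
    rewrite (classify pp hp cL r0 a0) // => i /andP[ip ir] np.
    by have := hall (Ordinal (ir : (i < r.+1)%N)); rewrite /= ip np /= => /eqP.
  move=> /forallPn [i]; rewrite !negb_imply => /and3P[ip np ti].
  by exists i; rewrite ip np ti -ltnS ltn_ord.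
set t := trace q r (alpha ^+ i0) in ti0.
have tq : t ^+ q = t by rewrite /t /q trace_in // Fq_fix.
have [y ty] := trace_nz pp hp nr0 cL'.
set z := trace q r y.
have zq : z ^+ q = z by rewrite /z /q trace_in // Fq_fix.
set y' := trace p (n * r) y in ty.
have y'z : y' = trace p n z by rewrite /y' /z trace_trans.
have y'p : y' ^+ p = y' by have := trp y; rewrite inF => /eqP.
have x0p' : x0 ^+ p = x0 by move: x0p; rewrite inF => /eqP.
have pq : forall u : L, u ^+ p = u -> u ^+ q = u by move=> u hu; rewrite /q fix_iter.
pose lam := x0 / y'.
have lamp : lam ^+ p = lam by rewrite /lam exprMn exprVn x0p' y'p.
pose c := lam * z / t.
have cq : c ^+ q = c.
  by rewrite /c /lam !exprMn !exprVn tq zq (pq _ x0p') (pq _ y'p).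
have hc : trace p (n * r) (c * alpha ^+ i0) = x0.
  rewrite tterm // -/t /c divfK // trace_scale // -y'z /lam divfK //.
have i0d : (i0 < d.+1)%N by lia.
pose j0 : 'I_d.+1 := Ordinal i0d.
pose sh (a : {ffun 'I_d.+1 -> L}) : {ffun 'I_d.+1 -> L} :=
  [ffun i => a i + (if i == j0 then c else 0)].
have sh_inj : injective sh.
  move=> a b /ffunP h; apply/ffunP => i; have := h i; rewrite !ffunE; exact: addIr.
have addq : forall u w : L, w ^+ q = w -> ((u + w) ^+ q == u + w) = (u ^+ q == u).
  by move=> u w hw; rewrite /q frobD // hw (inj_eq (addIr w)).
have sh_in : forall a, (sh a \in Fd L p q d) = (a \in Fd L p q d).
  move=> a; rewrite !inE; congr [&& _, _ & _].
  - apply: eq_forallb => i; rewrite !inF ffunE; case: ifP => _; first by rewrite addq.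
    by rewrite addr0.
  - apply: eq_forallb => i; rewrite ffunE; case: (i =P j0) => [->|_]; last by rewrite addr0.
    by rewrite /= (negbTE i0p).
  - rewrite ffunE; case: (ord_max =P j0) => [h|_]; last by rewrite addr0.
    have := congr1 val h; rewrite /= => hh; exfalso; lia.
have ev_sh : forall a, trace p (n * r) (poly_of (sh a)).[alpha] =
    trace p (n * r) (poly_of a).[alpha] + x0.
  move=> a; rewrite !ev -hc -trDp; congr (trace _ _ _).
  under eq_bigr => i _ do rewrite ffunE mulrDl.
  rewrite big_split /=; congr (_ + _).
  rewrite (bigD1 j0) //= eqxx big1 ?addr0 // => i /negbTE ->; by rewrite mul0r.
set S := \sum_(a in Fd L p q d) _.
have SS : S = S * psi x0.
  rewrite {1}/S (reindex_inj sh_inj) /= mulr_suml; apply: eq_big => a; first by rewrite sh_in.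
  by move=> _; rewrite ev_sh psiM.
have S0 : S = 0.
  apply/eqP; move: SS => /eqP; rewrite -subr_eq0 -{1}(mulr1 S) -mulrBr mulf_eq0 subr_eq0.
  by case/orP => // /eqP h; move: psix0; rewrite -h eqxx.
by rewrite S0 mul0r.
Qed.
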